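(* Let $G$ be a finite group and $E$ a $k^G$-comodule algebra. The map $c$ sending a $(k^G,E)$-Hopf torsor $T$ to the isomorphism class $[T^\times]$ of the $(G,E^\times)$-group torsor $T^\times$ induces a bijection of pointed sets $\mathcal{T}ors(k^G,E)\cong\mathrm{Tors}(G,E^\times)$.
   Context: $k^G$: Hopf algebra with $k$-basis $\{\delta_g\}$, $\delta_g\delta_{g'}=\partial_{g,g'}\delta_g$, unit $\sum_g\delta_g$, $\Delta(\delta_g)=\sum_{ab=g}\delta_a\otimes\delta_b$, $\varepsilon(\delta_g)=\partial_{g,e}$, $\sigma(\delta_g)=\delta_{g^{-1}}$. $E$ is a $k^G$-comodule algebra (coaction an algebra map) with $G$-action $\Delta_E(x)=\sum_g{}^gx\otimes\delta_g$ on $E^\times$. A $(k^G,E)$-Hopf module $T$ is a right $E$-module with coaction $\Delta_T(tx)=\Delta_T(t)\Delta_E(x)$, and $\Delta_T(u)=\sum_g{}^gu\otimes\delta_g$ gives a $G$-action on $T$. $T^\times=\{u:\ x\mapsto ux,\ E\to T\text{ bijective}\}$ (analogously $(T\otimes H)^\times$ over $E\otimes H$), $T^\bullet=\{u\in T^\times:\Delta_T(u)\in(T\otimes H)^\times\}$; a Hopf torsor is a Hopf module with $T^\bullet\ne\emptyset$; $\mathcal{T}ors(k^G,E)$ is the set of isomorphism classes (as Hopf modules) of Hopf torsors, pointed by $(E,\Delta_E)$. For $T$ a Hopf torsor, $T^\times$ with the restricted $G$-action and right $E^\times$-multiplication is a $(G,E^\times)$-group torsor (a nonempty left $G$-set with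 compatible, simply transitive right $E^\times$-action, ${}^g(pa)={}^gp\,{}^ga$). $\mathrm{Tors}(G,E^\times)$ is the set of isomorphism classes of $(G,E^\times)$-group torsors, pointed by the class of $E^\times$. *)

(* Defs.v *)
From HB Require Import structures.
From mathcomp Require Import all_boot all_order all_algebra all_fingroup.
Set Implicit Arguments. Unset Strict Implicit. Unset Printing Implicit Defensive.
Import GRing.Theory.
Local Open Scope ring_scope.

(* Conventions.
   * k^G is free on the basis (delta_g), so an element  sum_g x_g (x) delta_g
     of  M (x) k^G  is encoded by its coefficient function  g |-> x_g : G -> M.
     With this encoding the algebra E (x) k^G is the product algebra E^G
     (pointwise operations, since delta_g delta_h = [g=h] delta_g and the unit
     is sum_g delta_g).
   * A coaction  Delta : M -> M (x) k^G  is thus a map  rho : M -> G -> M, and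
     Delta(x) = sum_g rho x g (x) delta_g, i.e.  rho x g = {}^g x.
   * Coassociativity  (Delta (x) id) Delta = (id (x) Delta_{k^G}) Delta  reads,
     on the coefficient of delta_a (x) delta_b:  rho (rho x b) a = rho x (a*b);
     counitality (id (x) eps) Delta = id reads  rho x 1 = x.
   * A right E-module T over the k-algebra E is a k-module with a
     k-bilinear right action  act : T -> E -> T. *)

Section Defs.
Variables (k : fieldType) (G : finGroupType) (E : unitAlgType k).

Definition is_comodule_algebra (rho : E -> G -> E) : Prop :=
  [/\ (forall (a : k) (x y : E) (g : G), rho (a *: x + y) g = a *: rho x g + rho y g),
      (forall (x : E) (a b : G), rho (rho x b) a = rho x (a * b)%g),
      (forall x : E, rho x 1%g = x),
      (forall (x y : E) (g : G), rho (x * y) g = rho x g * rho y g) &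
      (forall g : G, rho 1 g = 1)].

Definition is_hopf_module (rhoE : E -> G -> E) (T : lmodType k)
    (act : T -> E -> T) (rhoT : T -> G -> T) : Prop :=
  (((forall (t s : T) (x : E), act (t + s) x = act t x + act s x)) /\
  ((forall (t : T) (x y : E), act t (x + y) = act t x + act t y)) /\
  ((forall (a : k) (t : T) (x : E),
          act (a *: t) x = a *: act t x /\ act t (a *: x) = a *: act t x)) /\
  ((forall t : T, act t 1 = t)) /\
  ((forall (t : T) (x y : E), act (act t x) y = act t (x * y))) /\
  ((forall (a : k) (t s : T) (g : G), rhoT (a *: t + s) g = a *: rhoT t g + rhoT s g)) /\
  ((forall (t : T) (a b : G), rhoT (rhoT t b) a = rhoT t (a * b)%g)) /\
  ((forall t : T, rhoT t 1%g = t)) /\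
  ((forall (t : T) (x : E) (g : G), rhoT (act t x) g = act (rhoT t g) (rhoE x g)))).

Definition Tunit (T : Type) (act : T -> E -> T) (u : T) : Prop :=
  bijective (fun x : E => act u x).

(* T^bullet = { u in T^x | Delta_T(u) in (T (x) k^G)^x }, where
   (T (x) k^G)^x is taken over E (x) k^G, acting componentwise. *)
Definition Tbullet (T : Type) (act : T -> E -> T) (rhoT : T -> G -> T) (u : T) : Prop :=
  Tunit act u /\
  bijective (fun f : {ffun G -> E} => [ffun g => act (rhoT u g) (f g)] : {ffun G -> T}).

Definition is_hopf_torsor (rhoE : E -> G -> E) (T : lmodType k)
    (act : T -> E -> T) (rhoT : T -> G -> T) : Prop :=
  is_hopf_module rhoE act rhoT /\ exists u : T, Tbullet act rhoT u.

Definition hopf_iso (T T' : lmodType k) (act : T -> E -> T) (rhoT : T -> G -> T)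
    (act' : T' -> E -> T') (rhoT' : T' -> G -> T') (f : T -> T') : Prop :=
  [/\ bijective f,
      (forall (a : k) (t s : T), f (a *: t + s) = a *: f t + f s),
      (forall (t : T) (x : E), f (act t x) = act' (f t) x) &
      (forall (t : T) (g : G), f (rhoT t g) = rhoT' (f t) g)].

(* A torsor is a set, given as a subset S of an
   ambient type P, with a left G-action gact and a right action ract of the
   group E^x = { x : E | x unit } (ract p a is only relevant for units a);
   the G-action on E^x is the restriction of the G-action a |-> rhoE a g. *)
Definition is_group_torsor (rhoE : E -> G -> E) (P : Type) (S : P -> Prop)
    (gact : G -> P -> P) (ract : P -> E -> P) : Prop :=
  (((exists p, S p)) /\
  ((forall g p, S p -> S (gact g p))) /\
  ((forall p a, S p -> a \is a GRing.unit -> S (ract p a))) /\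
  ((forall p, S p -> gact 1%g p = p)) /\
  ((forall g h p, S p -> gact (g * h)%g p = gact g (gact h p))) /\
  ((forall p, S p -> ract p 1 = p)) /\
  ((forall p a b, S p -> a \is a GRing.unit -> b \is a GRing.unit ->
          ract (ract p a) b = ract p (a * b))) /\
  ((forall g p a, S p -> a \is a GRing.unit ->
          gact g (ract p a) = ract (gact g p) (rhoE a g))) /\
  ((forall p q, S p -> S q ->
          exists a, [/\ a \is a GRing.unit, ract p a = q &
            forall b, b \is a GRing.unit -> ract p b = q -> b = a]))).

Definition torsor_iso (P : Type) (S : P -> Prop) (gact : G -> P -> P) (ract : P -> E -> P)
    (P' : Type) (S' : P' -> Prop) (gact' : G -> P' -> P') (ract' : P' -> E -> P')
    (f : P -> P') : Prop :=
  [/\ (forall p, S p -> S' (f p)),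
      (forall p q, S p -> S q -> f p = f q -> p = q),
      (forall p', S' p' -> exists2 p, S p & f p = p'),
      (forall g p, S p -> f (gact g p) = gact' g (f p)) &
      (forall p a, S p -> a \is a GRing.unit -> f (ract p a) = ract' (f p) a)].

Definition c_torsor_iso (T : lmodType k) (act : T -> E -> T) (rhoT : T -> G -> T)
    (P : Type) (S : P -> Prop) (gact : G -> P -> P) (ract : P -> E -> P) : Prop :=
  exists f, torsor_iso (Tunit act) (fun g u => rhoT u g) act S gact ract f.

End Defs.

(* Main.v *)
Require Import Defs.
From HB Require Import structures.
From mathcomp Require Import all_boot all_order all_algebra all_fingroup.
From Stdlib Require Import ClassicalEpsilon FunctionalExtensionality.
Set Implicit Arguments. Unset Strict Implicit.
Import GRing.Theory.
Local Open Scope ring_scope.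

Lemma bij_inv_ex (A B : Type) (f : A -> B) :
  bijective f -> { g : B -> A | cancel f g /\ cancel g f }.
Proof.
move=> H; apply: constructive_indefinite_description.
by case: H => g h1 h2; exists g.
Qed.

Lemma Tunit_inj (k : fieldType) (E : unitAlgType k) (T : Type) (act : T -> E -> T) u x y :
  Tunit act u -> act u x = act u y -> x = y.
Proof. by case=> g h1 _ e; rewrite -(h1 x) -(h1 y) e. Qed.

Lemma Tunit_surj (k : fieldType) (E : unitAlgType k) (T : Type) (act : T -> E -> T) u t :
  Tunit act u -> exists x, act u x = t.
Proof. by case=> g _ h2; exists (g t); rewrite h2. Qed.

Lemma Tunit_ract (k : fieldType) (E : unitAlgType k) (T : Type) (act : T -> E -> T)
  (HA : forall t x y, act (act t x) y = act t (x * y)) (H1 : forall t, act t 1 = t) u a :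
  Tunit act u -> a \is a GRing.unit -> Tunit act (act u a).
Proof.
case=> g h1 h2 ua.
exists (fun t => a^-1 * g t) => [x|t]; first by rewrite /= HA h1 mulKr.
by rewrite HA mulrA mulrV // mul1r h2.

Qed.

Lemma Tunit_trans (k : fieldType) (E : unitAlgType k) (T : Type) (act : T -> E -> T)
  (HA : forall t x y, act (act t x) y = act t (x * y)) (H1 : forall t, act t 1 = t) u v :
  Tunit act u -> Tunit act v -> exists a, a \is a GRing.unit /\ act u a = v.
Proof.
move=> hu hv.
have [a ea] := Tunit_surj v hu.
have [b eb] := Tunit_surj u hv.
exists a; split=> //; apply/unitrP; exists b; split.
  apply: (Tunit_inj hv); by rewrite -HA eb ea H1.
apply: (Tunit_inj hu); by rewrite -HA ea eb H1.
Qed.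

Lemma unit_Tunit (k : fieldType) (E : unitAlgType k) (a : E) :
  Tunit ( *%R) a <-> a \is a GRing.unit.
Proof.
split=> [h|ua].
  have [b [ub eb]] := Tunit_trans (act := *%R) (fun x y z => esym (@mulrA E x y z)) (@mulr1 E) (u := 1) (v := a)
     ltac:(by exists id => x; rewrite /= mul1r) h.
  by rewrite -eb mul1r.
have := Tunit_ract (act := *%R) (fun x y z => esym (@mulrA E x y z)) (@mulr1 E) (u := 1) ltac:(by exists id => x; rewrite /= mul1r) ua.
by rewrite mul1r.
Qed.

Lemma rho_unit (k : fieldType) (G : finGroupType) (E : unitAlgType k) (rhoE : E -> G -> E) a g :
  is_comodule_algebra rhoE -> a \is a GRing.unit -> rhoE a g \is a GRing.unit.
Proof.
case=> _ _ _ hM h1 /unitrP [b [e1 e2]]; apply/unitrP; exists (rhoE b g).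
by rewrite -!hM e1 e2 h1.
Qed.
Lemma bullet_rho (k : fieldType) (G : finGroupType) (E : unitAlgType k) (T : Type)
  (act : T -> E -> T) (rhoT : T -> G -> T) u g :
  Tbullet act rhoT u -> Tunit act (rhoT u g).
Proof.
case=> _ hb; case: (bij_inv_ex hb) => Fi [c1 c2].
have inj : forall x y, act (rhoT u g) x = act (rhoT u g) y -> x = y.
  move=> x y e.
  have := c1 [ffun h => if h == g then x else y].
  have := c1 [ffun h : G => y].
  have -> : [ffun g0 => act (rhoT u g0) ([ffun h => if h == g then x else y] g0)]
     = [ffun g0 => act (rhoT u g0) ([ffun h : G => y] g0)].
    by apply/ffunP => h; rewrite !ffunE; case: eqP => // ->.
  move=> -> /(congr1 (fun f : {ffun G -> E} => f g)); by rewrite !ffunE eqxx.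
have sur : forall t, act (rhoT u g) (Fi [ffun=> t] g) = t.
  move=> t; have := congr1 (fun f : {ffun G -> T} => f g) (c2 [ffun=> t]).
  by rewrite /= !ffunE.
exists (fun t => Fi [ffun=> t] g) => [x|t] /=; last exact: sur.
by apply: inj; rewrite sur.
Qed.

Lemma part1 (k : fieldType) (G : finGroupType) (E : unitAlgType k)
    (rhoE : E -> G -> E) (T : lmodType k) (act : T -> E -> T) (rhoT : T -> G -> T) :
  is_comodule_algebra rhoE -> is_hopf_torsor rhoE act rhoT ->
  is_group_torsor rhoE (Tunit act) (fun g u => rhoT u g) act.
Proof.
move=> hE [[hAd1 [hAd2 [hAs [hA1 [hAA [hRl [hRR [hR1 hRA]]]]]]]] [u hu]].
have uT : Tunit act u by case: hu.
have gT : forall g p, Tunit act p -> Tunit act (rhoT p g).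
  move=> g p hp; have [a [ua ea]] := Tunit_trans hAA hA1 uT hp.
  rewrite -ea hRA; apply: Tunit_ract => //; first exact: bullet_rho hu.
  exact: rho_unit.
split; first by exists u.
split; first by move=> g p hp; apply: gT.
split; first by move=> p a hp ua; apply: Tunit_ract.
split; first by move=> p _; apply: hR1.
split; first by move=> g h p _; rewrite hRR.
split; first by move=> p _; apply: hA1.
split; first by move=> p a b _ _ _; apply: hAA.
split; first by move=> g p a _ _; apply: hRA.
move=> p q hp hq; have [a [ua ea]] := Tunit_trans hAA hA1 hp hq.
exists a; split=> // b _ eb; apply: (Tunit_inj hp); by rewrite ea eb.
Qed.
Lemma part2 (k : fieldType) (G : finGroupType) (E : unitAlgType k)
    (T : lmodType k) (act : T -> E -> T) (rhoT : T -> G -> T)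
    (T' : lmodType k) (act' : T' -> E -> T') (rhoT' : T' -> G -> T') f :
  hopf_iso act rhoT act' rhoT' f ->
  torsor_iso (Tunit act) (fun g u => rhoT u g) act (Tunit act') (fun g u => rhoT' u g) act' f.
Proof.
case=> fb _ fA fR; case: (bij_inv_ex fb) => fi [c1 c2].
split.
- move=> p hp; apply: (eq_bij (bij_comp fb hp)) => x /=; exact: fA.
- move=> p q _ _ e; by rewrite -(c1 p) e c1.
- move=> p' hp; exists (fi p') => //.
  have fib : bijective fi by exists f.
  apply: (eq_bij (bij_comp fib hp)) => x /=.
  by rewrite -{1}(c2 p') -fA c1.
- by move=> g p _; apply: fR.
- by move=> p a _ _; apply: fA.
Qed.

Lemma part3 (k : fieldType) (G : finGroupType) (E : unitAlgType k)
    (rhoE : E -> G -> E)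
    (T : lmodType k) (act : T -> E -> T) (rhoT : T -> G -> T)
    (T' : lmodType k) (act' : T' -> E -> T') (rhoT' : T' -> G -> T') :
  is_comodule_algebra rhoE ->
  is_hopf_torsor rhoE act rhoT -> is_hopf_torsor rhoE act' rhoT' ->
  c_torsor_iso act rhoT (Tunit act') (fun g u => rhoT' u g) act' ->
  exists f, hopf_iso act rhoT act' rhoT' f.
Proof.
move=> hE hT hT' [f [fS finj fsur fG fA]].
have gtT := part1 hE hT.
case: hT => [[hAd1 [hAd2 [hAs [hA1 [hAA [hRl [hRR [hR1 hRA]]]]]]]] [u hu]].
case: hT' => [[hAd1' [hAd2' [hAs' [hA1' [hAA' [hRl' [hRR' [hR1' hRA']]]]]]]] _].
have uT : Tunit act u by case: hu.
case: (bij_inv_ex uT) => ui [c1 c2].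
have fuT := fS _ uT.
have uib : bijective ui by exists (fun x => act u x).
exists (fun t => act' (f u) (ui t)); split.
- exact: (bij_comp fuT uib).
- move=> a t s.
  have -> : ui (a *: t + s) = a *: ui t + ui s.
    by apply: (Tunit_inj uT); rewrite hAd2 (proj2 (hAs _ _ _)) !c2.
  by rewrite hAd2' (proj2 (hAs' _ _ _)).
- move=> t x.
  have -> : ui (act t x) = ui t * x by apply: (Tunit_inj uT); rewrite -hAA !c2.
  by rewrite hAA'.
- move=> t g.
  case: gtT => _ [gS _].
  have [a [ua ea]] := Tunit_trans hAA hA1 uT (gS g u uT).
  rewrite -{1}(c2 t) hRA -ea hAA c1 -hAA' -fA // ea fG // hRA'.
Qed.
Lemma E_hopf_torsor_tw (k : fieldType) (G : finGroupType) (E : unitAlgType k)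
    (rhoE : E -> G -> E) (c : G -> E) :
  is_comodule_algebra rhoE ->
  (forall g, c g \is a GRing.unit) -> c 1%g = 1 ->
  (forall a b, c (a * b)%g = c a * rhoE (c b) a) ->
  is_hopf_torsor rhoE (T := E) ( *%R) (fun x g => c g * rhoE x g).
Proof.
move=> [hL hRR hR1 hM hE1] cu c1 cM.
split.
  split; first by move=> *; rewrite mulrDl.
  split; first by move=> *; rewrite mulrDr.
  split; first by move=> *; rewrite -scalerAl -scalerAr.
  split; first by move=> *; rewrite mulr1.
  split; first by move=> *; rewrite mulrA.
  split; first by move=> *; rewrite hL mulrDr -scalerAr.
  split; first by move=> t a b; rewrite hM hRR mulrA cM.
  split; first by move=> t; rewrite hR1 c1 mul1r.
  by move=> t x g; rewrite hM mulrA.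
exists 1; split; first by apply/unit_Tunit; exact: unitr1.
exists (fun f : {ffun G -> E} => [ffun g => (c g)^-1 * f g]) => f;
  apply/ffunP => g; rewrite !ffunE ?hE1 ?mulr1 ?mulKr ?mulrA ?mulrV ?mul1r //.
Qed.

Lemma part4 (k : fieldType) (G : finGroupType) (E : unitAlgType k)
    (rhoE : E -> G -> E) (P : Type) (S : P -> Prop) (gact : G -> P -> P) (ract : P -> E -> P) :
  is_comodule_algebra rhoE ->
  is_group_torsor rhoE S gact ract ->
  exists (T : lmodType k) (act : T -> E -> T) (rhoT : T -> G -> T),
    is_hopf_torsor rhoE act rhoT /\ c_torsor_iso act rhoT S gact ract.
Proof.
move=> hE [hne [hgS [hrS [hg1 [hgM [hr1 [hrM [hgr htr]]]]]]]].
case: (constructive_indefinite_description _ hne) => p0 hp0.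
have H : forall g, exists a, a \is a GRing.unit /\ ract p0 a = gact g p0.
  by move=> g; have [a [ua ea _]] := htr _ _ hp0 (hgS g _ hp0); exists a.
pose c g := proj1_sig (constructive_indefinite_description _ (H g)).
have cP : forall g, c g \is a GRing.unit /\ ract p0 (c g) = gact g p0.
  by move=> g; rewrite /c; case: constructive_indefinite_description.
have uniq : forall q b b', S q -> b \is a GRing.unit -> b' \is a GRing.unit ->
    ract p0 b = q -> ract p0 b' = q -> b = b'.
  move=> q b b' hq ub ub' eb eb'.
  have [a [_ _ U]] := htr _ _ hp0 hq.
  by rewrite (U _ ub eb) (U _ ub' eb').
have c1 : c 1%g = 1.
  case: (cP 1%g) => u e; apply: (uniq p0) => //; first exact: unitr1.
  by rewrite hg1 in e.
  by rewrite hr1.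
have cM : forall a b, c (a * b)%g = c a * rhoE (c b) a.
  move=> a b; case: (cP (a*b)%g) => u e; case: (cP a) => ua ea; case: (cP b) => ub eb.
  have urb := rho_unit a hE ub.
  apply: (uniq (gact (a * b)%g p0)) => //; first exact: hgS.
  - by rewrite unitrMl.
  - by rewrite -hrM // ea -hgr // eb -hgM.
exists E, ( *%R), (fun x g => c g * rhoE x g); split.
  by apply: E_hopf_torsor_tw => // g; case: (cP g).
exists (fun x => ract p0 x); split.
- by move=> x /unit_Tunit ux; apply: hrS.
- move=> x y /unit_Tunit ux /unit_Tunit uy e; apply: (uniq (ract p0 y)) => //.
  exact: hrS.
- move=> p' hp'; have [a [ua ea _]] := htr _ _ hp0 hp'.
  by exists a => //; apply/unit_Tunit.
- move=> g x /unit_Tunit ux; case: (cP g) => ug eg.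
  by rewrite -hrM // ?rho_unit // eg hgr.
- by move=> x a /unit_Tunit ux ua; rewrite hrM.
Qed.
Theorem corollary3p8 (k : fieldType) (G : finGroupType) (E : unitAlgType k)
    (rhoE : E -> G -> E) :
  is_comodule_algebra rhoE ->
  [/\
   (* c is well defined: T^x is a (G,E^x)-group torsor ... *)
   (forall (T : lmodType k) (act : T -> E -> T) (rhoT : T -> G -> T),
      is_hopf_torsor rhoE act rhoT ->
      is_group_torsor rhoE (Tunit act) (fun g u => rhoT u g) act),
   (* ... and isomorphic Hopf torsors give isomorphic group torsors; *)
   (forall (T : lmodType k) (act : T -> E -> T) (rhoT : T -> G -> T)
           (T' : lmodType k) (act' : T' -> E -> T') (rhoT' : T' -> G -> T'),
      is_hopf_torsor rhoE act rhoT -> is_hopf_torsor rhoE act' rhoT' ->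
      (exists f, hopf_iso act rhoT act' rhoT' f) ->
      c_torsor_iso act rhoT (Tunit act') (fun g u => rhoT' u g) act'),
   (* the induced map on isomorphism classes is injective; *)
   (forall (T : lmodType k) (act : T -> E -> T) (rhoT : T -> G -> T)
           (T' : lmodType k) (act' : T' -> E -> T') (rhoT' : T' -> G -> T'),
      is_hopf_torsor rhoE act rhoT -> is_hopf_torsor rhoE act' rhoT' ->
      c_torsor_iso act rhoT (Tunit act') (fun g u => rhoT' u g) act' ->
      exists f, hopf_iso act rhoT act' rhoT' f),
   (* it is surjective; *)
   (forall (P : Type) (S : P -> Prop) (gact : G -> P -> P) (ract : P -> E -> P),
      is_group_torsor rhoE S gact ract ->
      exists (T : lmodType k) (act : T -> E -> T) (rhoT : T -> G -> T),
        is_hopf_torsor rhoE act rhoT /\ c_torsor_iso act rhoT S gact ract) &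
   (* and it preserves base points: (E, Delta_E) is a Hopf torsor, E^x is a
      group torsor, and c([E]) = [E^x]. *)
   [/\ is_hopf_torsor rhoE (T := E) ( *%R) rhoE,
       is_group_torsor rhoE (fun x : E => x \is a GRing.unit) (fun g x => rhoE x g) ( *%R) &
       c_torsor_iso (T := E) ( *%R) rhoE
         (fun x : E => x \is a GRing.unit) (fun g x => rhoE x g) ( *%R)]].
Proof.
move=> hE; split.
- move=> T act rhoT h; exact: (part1 hE h).
- by move=> T act rhoT T' act' rhoT' _ _ [f hf]; rewrite /c_torsor_iso; exists f; apply: part2.
- move=> T act rhoT T' act' rhoT' h1 h2 h3; exact: (part3 hE h1 h2 h3).
- move=> P S ga ra h; exact: (part4 hE h).
have hT : is_hopf_torsor rhoE (T := E) ( *%R) rhoE.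
  have h1 : forall g, rhoE 1 g = 1 by case: hE.
  have := @E_hopf_torsor_tw k G E rhoE (fun _ => 1) hE (fun _ => unitr1 _)
    erefl.
  have e : (fun x g => (fun _ : G => 1 : E) g * rhoE x g) = rhoE.
    by apply: functional_extensionality => x; apply: functional_extensionality => g; rewrite mul1r.
  rewrite e; apply => a b; by rewrite h1 mulr1.
case: hE => hL hRR hR1 hM hE1.
split=> //.
- split; first by exists 1; exact: unitr1.
  split; first by move=> g p hp; apply: rho_unit.
  split; first by move=> p a hp ha; rewrite unitrMl.
  split; first by move=> p _; apply: hR1.
  split; first by move=> g h p _; rewrite hRR.
  split; first by move=> p _; apply: mulr1.
  split; first by move=> *; rewrite mulrA.
  split; first by move=> *; apply: hM.
  move=> p q hp hq; exists (p^-1 * q); split.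
  + by rewrite unitrMl ?unitrV.
  + by rewrite mulrA mulrV // mul1r.
  + by move=> b _ <-; rewrite mulrA mulVr // mul1r.
- rewrite /c_torsor_iso; exists id; split;
    [by move=> p /unit_Tunit | by [] | by move=> p' hp'; exists p' => //; apply/unit_Tunit
    | by [] | by []].
Qed.
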